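(* Let $\mathcal{G}$ be a simple temporal clique on $n$ vertices and let $\mathcal{T}^+=(V,E^+_T)$ be obtained by the backward construction (for any choice of the arbitrary choices). Then the number of collectors is at most $n/2$.
   Context: A simple temporal clique is a pair $\mathcal{G}=(G,\lambda)$ where $G=(V,E)$ is the complete graph on a finite set $V$ of $n$ vertices and $\lambda:E\to\mathbb{N}$ assigns to each edge a single integer label such that any two distinct edges sharing an endpoint have different labels; the label of an arc $(x,y)$ is $\lambda(\{x,y\})$. For a vertex $v$, $e^+(v)$ is the edge incident to $v$ with largest label. Backward construction: let $E^+$ be the set of arcs $(v,u)$ with $\{u,v\}=e^+(v)$, except that if $e^+(u)=e^+(v)=\{u,v\}$ only one of the two arcs $(u,v),(v,u)$ is included (arbitrarily). Initialize $E^+_T:=E^+$. For every vertex $v$ of in-degree at least $2$ in $(V,E^+)$, let $(u_1,v),\dots,(u_\ell,v)$ be its in-arcs in $E^+$, where $(u_\ell,v)$ has the smallest label; for each $i<\ell$, if $u_i$ has in-degree $0$ in $(V,E^+)$, replace $(u_i,v)$ by $(v,u_i)$ in $E^+_T$, and otherwise remove $(u_i,v)$ from $E^+_T$. Set $\mathcal{T}^+=(V,E^+_T)$. A collector is a vertex of in-degree $0$ in $\mathcal{T}^+$. *)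

(* Defs.v *)
From mathcomp Require Import all_boot.
Set Implicit Arguments. Unset Strict Implicit. Unset Printing Implicit Defensive.

(* Simple temporal clique on vertex set V: the label of the edge {x,y}
   (x <> y) is lam x y; lam is symmetric (labels live on unordered edges),
   and distinct edges sharing an endpoint have distinct labels. The value
   lam x x is irrelevant. *)
Definition simple_temporal_clique (V : finType) (lam : V -> V -> nat) : Prop :=
  (forall x y : V, lam x y = lam y x) /\
  (forall x y z : V, x != y -> x != z -> y != z -> lam x y != lam x z).

Section Backward.
Variables (V : finType) (lam : V -> V -> nat).
(* [b] encodes the arbitrary choices: for a pair {u,v} with
   e^+(u) = e^+(v) = {u,v}, the arc (v,u) is kept iff b v u; b is a
   tournament (exactly one of b u v, b v u for u <> v). *)
Variable b : V -> V -> bool.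

Definition is_eplus (v u : V) : bool :=
  (u != v) && [forall w, (w != v) ==> (lam v w <= lam v u)].

Definition Eplus (v u : V) : bool :=
  is_eplus v u && (is_eplus u v ==> b v u).

Definition indeg_plus (v : V) : nat := #|[set u | Eplus u v]|.

Definition min_in (u v : V) : bool :=
  Eplus u v && [forall z, Eplus z v ==> (lam u v <= lam z v)].

Definition ET (x y : V) : bool :=
  (Eplus x y && ((indeg_plus y < 2) || min_in x y))
  || [&& Eplus y x, 2 <= indeg_plus x, ~~ min_in y x & indeg_plus y == 0].

Definition collectors : {set V} := [set v | [forall u, ~~ ET u v]].
End Backward.

(* Main.v *)
Require Import Defs.
From mathcomp Require Import all_boot.
From mathcomp Require Import zify.

Section Proofs.
Variables (V : finType) (lam : V -> V -> nat) (b : V -> V -> bool).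
Hypothesis HV : 2 <= #|V|.
Hypothesis Hs : simple_temporal_clique lam.
Hypothesis Hb : forall u v : V, u != v -> b u v = ~~ b v u.

Lemma other (v : V) : exists w, w != v.
Proof.
apply/existsP; rewrite -negb_forall; apply/negP => /forallP H.
have: #|V| <= 1.
  rewrite -(card1 v); apply: subset_leq_card; apply/subsetP => x _.
  by rewrite !inE H.
move=> H1; lia.
Qed.

Lemma eplus_ex (v : V) : exists u, is_eplus lam v u.
Proof.
have [w0 Hw0] := other v.
case: (@arg_maxnP V w0 (fun w => w != v) (lam v) Hw0) => u Hu Hmax.
exists u; rewrite /is_eplus Hu /=; apply/forallP => w; apply/implyP => Hw.
exact: Hmax.
Qed.

Lemma min_ex (v : V) : (exists u, Eplus lam b u v) -> exists x, min_in lam b x v.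
Proof.
case=> u Hu.
case: (@arg_minnP V u (fun z => Eplus lam b z v) (fun z => lam z v) Hu) => x Hx Hmin.
exists x; rewrite /min_in Hx /=; apply/forallP => z; apply/implyP => Hz.
exact: Hmin.
Qed.

Lemma coll_noin (v : V) : v \in collectors lam b -> forall u, ~~ Eplus lam b u v.
Proof.
rewrite inE => /forallP Hc u; apply/negP => Hu.
have [x Hx] : exists x, min_in lam b x v by apply: min_ex; exists u.
have := Hc x; rewrite /ET.
by move: (Hx); rewrite /min_in => /andP [HE HF]; rewrite HE HF orbT.
Qed.

Lemma coll_out (v u : V) : v \in collectors lam b -> is_eplus lam v u ->
  Eplus lam b v u /\ ((indeg_plus lam b u < 2) || min_in lam b v u).
Proof.
move=> Hc Hvu.
have Hin := coll_noin v Hc.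
have Hneq : u != v by move: Hvu => /andP [].
have HE : Eplus lam b v u.
  rewrite /Eplus Hvu /=; apply/implyP => Huv.
  case Hbv: (b v u) => //.
  have : Eplus lam b u v by rewrite /Eplus Huv /= (Hb _ _ Hneq) Hbv implybT.
  by move: (Hin u) => /negP.
split => //.
case H: ((indeg_plus lam b u < 2) || min_in lam b v u) => //.
move: H => /norP [H1 H2].
have Hi0 : indeg_plus lam b v == 0.
  rewrite /indeg_plus cards_eq0; apply/eqP/setP => x; rewrite !inE.
  by apply/negbTE.
move: Hc; rewrite inE => /forallP /(_ u); rewrite /ET.
by rewrite HE -leqNgt in H1 *; rewrite H1 H2 Hi0 orbT.
Qed.

Definition f (v : V) : V := odflt v [pick u | is_eplus lam v u].

Lemma f_eplus v : is_eplus lam v (f v).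
Proof.
rewrite /f; case: pickP => [u //|H].
have [u Hu] := eplus_ex v; by rewrite H in Hu.
Qed.

Lemma f_noncoll v : v \in collectors lam b -> f v \notin collectors lam b.
Proof.
move=> Hc; have [HE H] := coll_out v (f v) Hc (f_eplus v).
rewrite inE negb_forall; apply/existsP; exists v; rewrite negbK /ET HE.
by rewrite H.
Qed.

Lemma f_inj : {in collectors lam b &, injective f}.
Proof.
move=> v1 v2 H1 H2 Heq; apply/eqP; apply/negPn/negP => Hne.
have [E1 M1] := coll_out v1 (f v1) H1 (f_eplus v1).
have [E2 M2] := coll_out v2 (f v2) H2 (f_eplus v2).
rewrite -Heq in E2 M2.
have Hi : 2 <= indeg_plus lam b (f v1).
  rewrite /indeg_plus; apply: (@leq_trans #|[set v1; v2]|).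
    by rewrite cards2 Hne.
  apply: subset_leq_card; apply/subsetP => x; rewrite !inE => /orP [] /eqP ->//.
have Hi2 : (indeg_plus lam b (f v1) < 2) = false by rewrite ltnNge Hi.
move: M1 M2; rewrite !Hi2 /= /min_in => /andP [_ /forallP F1] /andP [_ /forallP F2].
have L1 := F1 v2; have L2 := F2 v1; rewrite E2 /= in L1; rewrite E1 /= in L2.
have Heql : lam v1 (f v1) = lam v2 (f v1) by apply/eqP; rewrite eqn_leq L1 L2.
case: Hs => Hsym Hd.
have n1 : f v1 != v1 by move: (f_eplus v1) => /andP [].
have n2 : f v1 != v2 by rewrite Heq; move: (f_eplus v2) => /andP [].
have := Hd (f v1) v1 v2 n1 n2 Hne.
by rewrite (Hsym (f v1) v1) (Hsym (f v1) v2) Heql eqxx.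
Qed.

End Proofs.

Theorem lemma5 (V : finType) (lam : V -> V -> nat) (b : V -> V -> bool) :
  2 <= #|V| ->
  simple_temporal_clique lam ->
  (forall u v : V, u != v -> b u v = ~~ b v u) ->
  2 * #|collectors lam b| <= #|V|.
Proof.
move=> HV Hs Hb.
set C := collectors lam b.
have H1 : #|@f V lam @: C| = #|C| by apply: card_in_imset; apply: (@f_inj V lam b).
have H2 : @f V lam @: C \subset ~: C.
  apply/subsetP => x /imsetP [v Hv ->]; rewrite inE; exact: (@f_noncoll V lam b).
have := subset_leq_card H2; rewrite H1 => H.
have := cardsC C; lia.
Qed.
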